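(* Let $(X,\rho)$ be a bounded metric space, $A\in CL(X)$, $(A_k)\subset CL(X)$ and let $f\colon[0,\infty)\to[0,\infty)$ be an unbounded modulus. If $(A_k)$ is $f$-Wijsman statistically convergent to $A$, then $(A_k)$ is Wijsman Cesàro summable to $A$, i.e. $\lim_{n\to\infty}\frac1n\sum_{k=1}^n d(x,A_k)=d(x,A)$ for every $x\in X$.
   Context: A modulus is a function $f\colon[0,\infty)\to[0,\infty)$ such that $f(x)=0$ iff $x=0$, $f$ is subadditive, increasing and continuous. $CL(X)$ denotes the set of all non-empty closed subsets of $(X,\rho)$, and $d(x,B)=\inf_{y\in B}\rho(x,y)$. For an unbounded modulus $f$ and $K\subseteq\mathbb N$, the $f$-density is $d^f(K)=\lim_{n\to\infty}\frac{f(|\{k\le n:k\in K\}|)}{f(n)}$ (when the limit exists). $(A_k)$ is $f$-Wijsman statistically convergent to $A$ if for every $x\in X$ and every $\varepsilon>0$ the set $\{k:|d(x,A_k)-d(x,A)|\ge\varepsilon\}$ has $f$-density $0$. *)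

(* Defs.v *)
From Stdlib Require Import Reals Lra.
From Coquelicot Require Import Coquelicot.
Open Scope R_scope.

Definition is_metric {X : Type} (rho : X -> X -> R) : Prop :=
  (forall x y, 0 <= rho x y) /\
  (forall x y, rho x y = 0 <-> x = y) /\
  (forall x y, rho x y = rho y x) /\
  (forall x y z, rho x z <= rho x y + rho y z).

Definition metric_bounded {X : Type} (rho : X -> X -> R) : Prop :=
  exists M : R, forall x y, rho x y <= M.

Definition metric_closed {X : Type} (rho : X -> X -> R) (B : X -> Prop) : Prop :=
  forall x, (forall e, 0 < e -> exists y, B y /\ rho x y < e) -> B x.

Definition in_CL {X : Type} (rho : X -> X -> R) (B : X -> Prop) : Prop :=
  (exists y, B y) /\ metric_closed rho B.

(* d(x, B) = inf_{y in B} rho(x, y)  (finite for nonempty B since rho >= 0). *)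
Definition dist_set {X : Type} (rho : X -> X -> R) (x : X) (B : X -> Prop) : R :=
  real (Glb_Rbar (fun r => exists y, B y /\ r = rho x y)).

(* f : [0,oo) -> [0,oo) is a modulus (values of f outside [0,oo) are irrelevant). *)
Definition is_modulus (f : R -> R) : Prop :=
  (forall x, 0 <= x -> 0 <= f x) /\
  (forall x, 0 <= x -> (f x = 0 <-> x = 0)) /\
  (forall x y, 0 <= x -> 0 <= y -> f (x + y) <= f x + f y) /\
  (forall x y, 0 <= x -> x <= y -> f x <= f y) /\
  (forall x, 0 <= x -> forall eps, 0 < eps ->
     exists delta, 0 < delta /\
       forall y, 0 <= y -> Rabs (y - x) < delta -> Rabs (f y - f x) < eps).

Definition unbounded_fun (f : R -> R) : Prop :=
  forall M, exists x, 0 <= x /\ M < f x.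

(* |{k <= n : k in K}| for K a subset of N = {1,2,...}. *)
Fixpoint count_upto (K : nat -> bool) (n : nat) : nat :=
  match n with
  | O => O
  | S m => (count_upto K m + (if K (S m) then 1 else 0))%nat
  end.

Definition f_density_zero (f : R -> R) (K : nat -> bool) : Prop :=
  is_lim_seq (fun n => f (INR (count_upto K n)) / f (INR n)) 0.

Definition f_wijsman_stat_conv {X : Type} (rho : X -> X -> R) (f : R -> R)
    (Ak : nat -> X -> Prop) (A : X -> Prop) : Prop :=
  forall x : X, forall eps, 0 < eps ->
    f_density_zero f (fun k =>
      if Rle_dec eps (Rabs (dist_set rho x (Ak k) - dist_set rho x A))
      then true else false).

Definition wijsman_cesaro {X : Type} (rho : X -> X -> R)
    (Ak : nat -> X -> Prop) (A : X -> Prop) : Prop :=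
  forall x : X,
    is_lim_seq (fun n => sum_n_m (fun k => dist_set rho x (Ak k)) 1 n / INR n)
               (dist_set rho x A).

(* Main.v *)
Require Import Defs.
From Stdlib Require Import Reals Lra Lia ZArith.
From Coquelicot Require Import Coquelicot.
Open Scope R_scope.

Lemma dist_set_bounds {X : Type} (rho : X -> X -> R) (M : R) x (B : X -> Prop) :
  is_metric rho -> (forall x y, rho x y <= M) -> (exists y, B y) ->
  0 <= dist_set rho x B <= M.
Proof.
  intros [H0 _] HM [y By].
  unfold dist_set.
  destruct (Glb_Rbar_correct (fun r => exists y, B y /\ r = rho x y)) as [Hlb Hg].
  assert (h1 : Rbar_le (Glb_Rbar (fun r => exists y, B y /\ r = rho x y)) (rho x y)).
  { apply Hlb. exists y; auto. }
  assert (h2 : Rbar_le 0 (Glb_Rbar (fun r => exists y, B y /\ r = rho x y))).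
  { apply Hg. intros r [z [_ ->]]. simpl. apply H0. }
  destruct (Glb_Rbar (fun r => exists y, B y /\ r = rho x y)) as [g| |];
    simpl in *; try contradiction.
  split; [lra|]. specialize (HM x y). lra.
Qed.

Lemma f_mult (f : R -> R) : is_modulus f ->
  forall (k : nat) x, 0 <= x -> f (INR k * x) <= INR k * f x.
Proof.
  intros [Hp [Hz [Hs _]]] k x Hx. induction k.
  - simpl. replace (0 * x) with 0 by ring. assert (f 0 = 0) by (apply Hz; lra).
    lra.
  - rewrite S_INR. replace ((INR k + 1) * x) with (INR k * x + x) by ring.
    pose proof (pos_INR k).
    specialize (Hs (INR k * x) x ltac:(nra) Hx). nra.
Qed.

Fixpoint T (a : nat -> R) (n : nat) : R :=
  match n with O => 0 | S m => T a m + a (S m) end.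

Lemma T_sum a n : sum_n_m a 1 n = T a n.
Proof.
  induction n.
  - rewrite sum_n_m_zero by lia. reflexivity.
  - destruct n.
    + simpl. rewrite sum_n_n. simpl. lra.
    + rewrite sum_n_Sm by lia. rewrite IHn. reflexivity.
Qed.

Lemma T_bound (a : nat -> R) (d e M : R) (K : nat -> bool) :
  0 <= e -> (forall k, K k = false -> Rabs (a k - d) <= e) ->
  (forall k, Rabs (a k - d) <= M) ->
  forall n, Rabs (T a n - INR n * d) <= INR n * e + M * INR (count_upto K n).
Proof.
  intros He H1 H2 n. induction n.
  - simpl. rewrite Rmult_0_l, Rminus_0_r, Rabs_R0. lra.
  - simpl T. simpl count_upto. rewrite plus_INR, S_INR.
    replace (T a n + a (S n) - (INR n + 1) * d)
      with ((T a n - INR n * d) + (a (S n) - d)) by ring.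
    eapply Rle_trans; [apply Rabs_triang|].
    destruct (K (S n)) eqn:E.
    + simpl. specialize (H2 (S n)). lra.
    + simpl. specialize (H1 (S n) E). lra.
Qed.

Lemma count_le K n : (count_upto K n <= n)%nat.
Proof. induction n; simpl; [lia|]. destruct (K (S n)); lia. Qed.

Theorem corollary3p5 (X : Type) (rho : X -> X -> R) (f : R -> R)
    (A : X -> Prop) (Ak : nat -> X -> Prop) :
  is_metric rho -> metric_bounded rho ->
  in_CL rho A -> (forall k, in_CL rho (Ak k)) ->
  is_modulus f -> unbounded_fun f ->
  f_wijsman_stat_conv rho f Ak A ->
  wijsman_cesaro rho Ak A.
Proof.
  intros Hm [M HM] [HA _] HAk Hf _ Hst x.
  pose proof (dist_set_bounds rho M x A Hm HM HA) as BA.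
  assert (BK : forall k, 0 <= dist_set rho x (Ak k) <= M).
  { intro k. apply dist_set_bounds; auto. apply HAk. }
  assert (HM0 : 0 <= M) by (specialize (BK 0%nat); lra).
  apply is_lim_seq_spec. intros eps.
  pose proof (cond_pos eps) as Heps.
  set (e1 := eps / 2).
  set (K := fun k => if Rle_dec e1 (Rabs (dist_set rho x (Ak k) - dist_set rho x A))
      then true else false).
  set (delta := eps / (4 * (M + 1))).
  assert (Hd : 0 < delta) by (unfold delta; apply Rdiv_lt_0_compat; lra).
  destruct (archimed (1 / delta)) as [Hup _].
  assert (Hz : (0 < up (1/delta))%Z).
  { apply lt_IZR. assert (0 < 1/delta) by (apply Rdiv_lt_0_compat; lra). lra. }
  set (m := Z.to_nat (up (1/delta))).
  assert (Hmr : INR m = IZR (up (1/delta))).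
  { unfold m. rewrite INR_IZR_INZ, Z2Nat.id by lia. reflexivity. }
  assert (Hmd : 1 < INR m * delta).
  { rewrite Hmr. assert (1/delta * delta = 1) by (field; lra). nra. }
  assert (Hm0 : 0 < INR m) by (nra).
  specialize (Hst x e1 ltac:(unfold e1; lra)).
  unfold f_density_zero in Hst. apply is_lim_seq_spec in Hst.
  destruct (Hst (mkposreal (1 / INR m) ltac:(apply Rdiv_lt_0_compat; lra))) as [N HN].
  exists (S N). intros n Hn.
  specialize (HN n ltac:(lia)). simpl in HN.
  fold K in HN.
  destruct Hf as [Hfp [Hfz [Hfs [Hfm Hfc]]]].
  assert (Hn0 : 0 < INR n) by (apply lt_0_INR; lia).
  assert (Hfn : 0 < f (INR n)).
  { destruct (Hfp (INR n) ltac:(lra)) as [h|h]; auto.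
    exfalso. symmetry in h. apply (Hfz (INR n) ltac:(lra)) in h. lra. }
  set (c := INR (count_upto K n)).
  assert (Hc0 : 0 <= c) by apply pos_INR.
  assert (Hc : c < delta * INR n).
  { destruct (Rlt_le_dec c (delta * INR n)) as [h|h]; auto. exfalso.
    assert (h1 : INR n <= INR m * c) by nra.
    assert (h2 : f (INR n) <= INR m * f c).
    { assert (g1 : f (INR n) <= f (INR m * c)) by (apply Hfm; lra).
      assert (g2 : f (INR m * c) <= INR m * f c).
      { apply (f_mult f (conj Hfp (conj Hfz (conj Hfs (conj Hfm Hfc))))); exact Hc0. }
      lra. }
    rewrite Rminus_0_r in HN. rewrite Rabs_pos_eq in HN.
    2:{ apply Rdiv_le_0_compat; auto. }
    fold c in HN.
    assert (h3 : f c < 1 / INR m * f (INR n)).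
    { apply (Rmult_lt_compat_r (f (INR n))) in HN; auto.
      unfold Rdiv in HN. rewrite Rmult_assoc, Rinv_l in HN; lra. }
    assert (h4 : INR m * (1 / INR m) = 1) by (field; lra).
    nra. }
  rewrite T_sum.
  pose proof (T_bound (fun k => dist_set rho x (Ak k)) (dist_set rho x A) e1 M K)
    as TB.
  assert (P1 : forall k, K k = false ->
     Rabs (dist_set rho x (Ak k) - dist_set rho x A) <= e1).
  { intros k Hk. unfold K in Hk.
    destruct (Rle_dec e1 _); [discriminate|lra]. }
  assert (P2 : forall k, Rabs (dist_set rho x (Ak k) - dist_set rho x A) <= M).
  { intro k. specialize (BK k). apply Rabs_le. lra. }
  specialize (TB ltac:(unfold e1; lra) P1 P2 n). fold c in TB.
  replace (T (fun k => dist_set rho x (Ak k)) n / INR n - dist_set rho x A)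
    with ((T (fun k => dist_set rho x (Ak k)) n - INR n * dist_set rho x A) / INR n)
    by (field; lra).
  unfold Rdiv. rewrite Rabs_mult, Rabs_inv, (Rabs_pos_eq (INR n)) by lra.
  apply (Rmult_lt_reg_r (INR n)); auto.
  rewrite Rmult_assoc, Rinv_l, Rmult_1_r by lra.
  assert (M * c <= M * (delta * INR n)) by nra.
  assert (M * delta <= eps / 4).
  { unfold delta. replace (M * (eps / (4 * (M + 1)))) with (eps/4 * (M / (M+1)))
      by (field; lra).
    assert (M / (M+1) <= 1).
    { apply (Rmult_le_reg_r (M+1)); [lra|]. unfold Rdiv.
      rewrite Rmult_assoc, Rinv_l; lra. }
    nra. }
  unfold e1 in TB. nra.
Qed.
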